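(* Let $L_w = BWB^\top\in\mathbb{R}^{n\times n}$ be the weighted Laplacian of a connected undirected graph with nonnegative edge weights (so that its second smallest eigenvalue is positive), and let $E\in\mathbb{R}^{n\times k}$ be a port matrix. Consider the system $\dot x = -L_w x + E d$, $y=E^\top x$, with transfer matrix $\mathbb{G}(s)=E^\top(sI+L_w)^{-1}E$. Let $\gamma>0$. If $\|\mathbb{G}\|_\infty\le\gamma$, then $P=\gamma I_n$ satisfies the Riccati inequality $$-PL_w - L_w^\top P + EE^\top + \frac{1}{\gamma^2}PEE^\top P \preceq 0 .$$
   Context: A weighted undirected graph has node set $\{v_1,\dots,v_n\}$, edge set $\{\mathcal{E}_1,\dots,\mathcal{E}_m\}$ and edge weights $w_1,\dots,w_m$. Given an arbitrary orientation of each edge, the incidence matrix $B\in\mathbb{R}^{n\times m}$ has $B_{ij}=1$ if edge $\mathcal{E}_j$ starts at $v_i$, $B_{ij}=-1$ if it ends at $v_i$, and $0$ otherwise; $W=\mathrm{diag}(w_1,\dots,w_m)$ and the weighted Laplacian is $L_w=BWB^\top$. A port matrix $E\in\mathbb{R}^{n\times k}$ is a matrix each of whose columns has exactly one entry equal to $1$, exactly one entry equal to $-1$, and all other entries $0$. The $\mathcal{H}_\infty$-norm $\|\mathbb{G}\|_\infty$ is the induced $\mathcal{L}_2$-gain from $d$ to $y$ with $x(0)=0$, which equals $\sup_{\omega\in\mathbb{R}}\bar\sigma(\mathbb{G}(j\omega))$ with $\bar\sigma$ the largest singular value. $M\preceq 0$ means $-M$ is symmetric positive semidefinite. *)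

(* Defs.v *)
From HB Require Import structures.
From mathcomp Require Import all_boot all_order all_algebra.
Set Implicit Arguments. Unset Strict Implicit. Unset Printing Implicit Defensive.
Import Order.TTheory GRing.Theory Num.Theory.
Local Open Scope ring_scope.

Definition incidence (C : numClosedFieldType) (n m : nat)
  (src dst : 'I_m -> 'I_n) : 'M[C]_(n, m) :=
  \matrix_(i < n, j < m) ((i == src j)%:R - (i == dst j)%:R).

Definition weightmx (C : numClosedFieldType) (m : nat) (w : 'I_m -> C) : 'M[C]_m :=
  diag_mx (\row_j w j).

Definition laplacian (C : numClosedFieldType) (n m : nat)
  (src dst : 'I_m -> 'I_n) (w : 'I_m -> C) : 'M[C]_n :=
  incidence C src dst *m weightmx w *m (incidence C src dst)^T.

Definition adj (C : numClosedFieldType) (n m : nat)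
  (src dst : 'I_m -> 'I_n) (w : 'I_m -> C) : rel 'I_n :=
  fun u v => [exists j : 'I_m, (0 < w j) &&
     (((src j == u) && (dst j == v)) || ((src j == v) && (dst j == u)))].

Definition connected_graph (C : numClosedFieldType) (n m : nat)
  (src dst : 'I_m -> 'I_n) (w : 'I_m -> C) : Prop :=
  forall u v : 'I_n, connect (adj src dst w) u v.

Definition port_matrix (C : numClosedFieldType) (n k : nat) (E : 'M[C]_(n, k)) : Prop :=
  forall j : 'I_k,
    #|[pred i | E i j == 1]| = 1%N /\ #|[pred i | E i j == -1]| = 1%N /\
    (forall i, E i j != 1 -> E i j != -1 -> E i j = 0).

Definition transfer (C : numClosedFieldType) (n k : nat)
  (L : 'M[C]_n) (E : 'M[C]_(n, k)) (s : C) : 'M[C]_k :=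
  E^T *m invmx (s%:M + L) *m E.

Definition vnorm2 (C : numClosedFieldType) (k : nat) (v : 'cV[C]_k) : C :=
  \sum_(i < k) `|v i 0| ^+ 2.

(* Largest singular value of M is at most g (g >= 0): the induced 2-norm bound
   ||M v|| <= g ||v|| for all v. *)
Definition sigma_max_le (C : numClosedFieldType) (p q : nat)
  (M : 'M[C]_(p, q)) (g : C) : Prop :=
  forall v : 'cV[C]_q, vnorm2 (M *m v) <= g ^+ 2 * vnorm2 v.

(* ||G||_oo <= g : sup over real omega of sigma_max(G(j omega)) <= g.
   omega = 0 is excluded: sI + L is singular there; G extends continuously to
   omega = 0, so the supremum is the same. *)
Definition hinf_le (C : numClosedFieldType) (k : nat) (G : C -> 'M[C]_k) (g : C) : Prop :=
  forall omega : C, omega \is Num.real -> omega != 0 ->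
    sigma_max_le (G (omega * 'i)) g.

Definition nsd (C : numClosedFieldType) (n : nat) (M : 'M[C]_n) : Prop :=
  (- M)^T = - M /\
  forall x : 'cV[C]_n, (forall i, x i 0 \is Num.real) ->
    0 <= ((x^T *m (- M) *m x) 0 0).

(* Main.v *)
Require Import Defs.
From HB Require Import structures.
From mathcomp Require Import all_boot all_order all_algebra.
From mathcomp Require Import ring.
Import Order.TTheory GRing.Theory Num.Theory.
Set Implicit Arguments. Unset Strict Implicit. Unset Printing Implicit Defensive.
Local Open Scope ring_scope.

Section S.
Variable C : numClosedFieldType.

Definition dot (n : nat) (p q : 'cV[C]_n) : C := \sum_i (p i 0)^* * q i 0.

Lemma dotC n (p q : 'cV[C]_n) : dot q p = (dot p q)^*.
Proof. rewrite /dot rmorph_sum; apply: eq_bigr => i _. by rewrite rmorphM /= conjCK mulrC. Qed.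

Lemma dotDr n (p q r : 'cV[C]_n) : dot p (q + r) = dot p q + dot p r.
Proof. rewrite /dot -big_split; apply: eq_bigr => i _; by rewrite mxE mulrDr. Qed.

Lemma dotDl n (p q r : 'cV[C]_n) : dot (q + r) p = dot q p + dot r p.
Proof. rewrite /dot -big_split; apply: eq_bigr => i _; by rewrite mxE rmorphD /= mulrDl. Qed.

Lemma dotZr n (p q : 'cV[C]_n) c : dot p (c *: q) = c * dot p q.
Proof. rewrite /dot mulr_sumr; apply: eq_bigr => i _; rewrite mxE; ring. Qed.

Lemma dotZl n (p q : 'cV[C]_n) c : dot (c *: p) q = c^* * dot p q.
Proof. rewrite /dot mulr_sumr; apply: eq_bigr => i _; rewrite mxE rmorphM /=; ring. Qed.

Lemma dotNr n (p q : 'cV[C]_n) : dot p (- q) = - dot p q.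
Proof. by rewrite -scaleN1r dotZr mulN1r. Qed.

Lemma dotNl n (p q : 'cV[C]_n) : dot (- p) q = - dot p q.
Proof. by rewrite -scaleN1r dotZl rmorphN rmorph1 mulN1r. Qed.

Lemma dot0r n (p : 'cV[C]_n) : dot p 0 = 0.
Proof. by rewrite /dot big1 // => i _; rewrite mxE mulr0. Qed.

Lemma dot_ge0 n (p : 'cV[C]_n) : 0 <= dot p p.
Proof. apply: sumr_ge0 => i _; by rewrite -normCKC exprn_ge0. Qed.

Lemma dot_vnorm n (p : 'cV[C]_n) : dot p p = vnorm2 p.
Proof. rewrite /dot /vnorm2; apply: eq_bigr => i _; by rewrite normCKC. Qed.

Lemma dot_eq0 n (p : 'cV[C]_n) : dot p p = 0 -> p = 0.
Proof.
move=> h; apply/matrixP => i j; rewrite (ord1 j) mxE.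
have hp : forall k : 'I_n, predT k -> 0 <= (p k 0)^* * p k 0.
  by move=> k _; rewrite -normCKC exprn_ge0.
have := @psumr_eq0P C _ predT (fun i => (p i 0)^* * p i 0) hp h i isT.
rewrite -normCKC; move=> /eqP; rewrite sqrf_eq0 normr_eq0; by move=> /eqP.
Qed.

Definition realmx m n (R : 'M[C]_(m, n)) := forall i j, (R i j)^* = R i j.

Lemma dot_mulT m n (R : 'M[C]_(m, n)) (p : 'cV[C]_m) (q : 'cV[C]_n) :
  realmx R -> dot (R^T *m p) q = dot p (R *m q).
Proof.
move=> hR; rewrite /dot.
under eq_bigr => i _ do rewrite !mxE rmorph_sum mulr_suml.
rewrite exchange_big /=; apply: eq_bigr => j _.
rewrite !mxE mulr_sumr; apply: eq_bigr => i _.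
rewrite mxE rmorphM /= hR; ring.
Qed.

Lemma dot_scal n (p q : 'cV[C]_n) c : dot p (c%:M *m q) = c * dot p q.
Proof. by rewrite mul_scalar_mx dotZr. Qed.

Lemma dot_expand n (N : 'M[C]_n) (p q : 'cV[C]_n) c1 c2 :
  dot (c1 *: p - c2 *: q) (N *m (c1 *: p - c2 *: q)) =
  c1^* * c1 * dot p (N *m p) - c1^* * c2 * dot p (N *m q)
  - c2^* * c1 * dot q (N *m p) + c2^* * c2 * dot q (N *m q).
Proof.
rewrite mulmxBr !dotDl !dotNl !dotDr !dotNr !dotZl -!scalemxAr !dotZr. ring.
Qed.
Lemma realmx_mul m n p (R : 'M[C]_(m, n)) (S : 'M[C]_(n, p)) :
  realmx R -> realmx S -> realmx (R *m S).
Proof.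
move=> hR hS i j; rewrite !mxE rmorph_sum; apply: eq_bigr => k _.
by rewrite rmorphM /= hR hS.
Qed.

Lemma realmx_tr m n (R : 'M[C]_(m, n)) : realmx R -> realmx R^T.
Proof. by move=> hR i j; rewrite !mxE hR. Qed.

Lemma real_incidence n m (src dst : 'I_m -> 'I_n) : realmx (incidence C src dst).
Proof. by move=> i j; rewrite !mxE rmorphB /= !rmorph_nat. Qed.

Lemma real_weight m (w : 'I_m -> C) : (forall j, 0 <= w j) -> realmx (weightmx w).
Proof.
by move=> hw i j; rewrite /weightmx !mxE rmorphMn /= conj_Creal // ger0_real.
Qed.

Lemma real_lap n m (src dst : 'I_m -> 'I_n) (w : 'I_m -> C) :
  (forall j, 0 <= w j) -> realmx (laplacian src dst w).
Proof.
move=> hw; rewrite /laplacian; apply: realmx_mul; last by apply/realmx_tr/real_incidence.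
by apply: realmx_mul; [apply: real_incidence | apply: real_weight].
Qed.

Lemma lap_tr n m (src dst : 'I_m -> 'I_n) (w : 'I_m -> C) :
  (laplacian src dst w)^T = laplacian src dst w.
Proof. by rewrite /laplacian !trmx_mul trmxK /weightmx tr_diag_mx mulmxA. Qed.

Lemma lap_psd n m (src dst : 'I_m -> 'I_n) (w : 'I_m -> C) (p : 'cV[C]_n) :
  (forall j, 0 <= w j) -> 0 <= dot p (laplacian src dst w *m p).
Proof.
move=> hw; rewrite /laplacian -!mulmxA -dot_mulT; last exact: real_incidence.
set c := _^T *m p; clearbody c.
rewrite /weightmx /dot; apply: sumr_ge0 => j _.
rewrite mul_diag_mx !mxE mulrCA -normCKC.
by apply: mulr_ge0 => //; apply: exprn_ge0.
Qed.

Lemma real_port n k (E : 'M[C]_(n, k)) : port_matrix E -> realmx E.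
Proof.
move=> hE i j; have [_ [_ h3]] := hE j.
case: (eqVneq (E i j) 1) => [->|h1]; first by rewrite rmorph1.
case: (eqVneq (E i j) (-1)) => [->|h2]; first by rewrite rmorphN rmorph1.
by rewrite (h3 i h1 h2) rmorph0.
Qed.
Lemma A_unit n (L : 'M[C]_n) (om : C) :
  L^T = L -> realmx L -> (forall p, 0 <= dot p (L *m p)) ->
  om \is Num.real -> om != 0 -> ((om * 'i)%:M + L) \in unitmx.
Proof.
move=> hLt hLr hpsd hom hom0.
rewrite -unitmx_tr -row_free_unit; apply: inj_row_free => v hv.
set y := v^T.
have hAy : ((om * 'i)%:M + L) *m y = 0.
  by rewrite /y -[(_ + L)]trmxK -trmx_mul hv trmx0.
have e := congr1 (dot y) hAy.
rewrite mulmxDl dotDr dot_scal dot0r in e.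
set Y := dot y y in e; set Ly := dot y (L *m y) in e.
have rY : Y \is Num.real by rewrite ger0_real // dot_ge0.
have rL : Ly \is Num.real by rewrite ger0_real // hpsd.
have e2 := congr1 ((fun z : C => z^*)) e.
rewrite rmorphD rmorphM rmorphM /= conjCi !conj_Creal // in e2.
have : (2 * om * 'i) * Y = 0.
  have -> : (2 * om * 'i) * Y = (om * 'i * Y + Ly) - (om * - 'i * Y + Ly) by ring.
  by rewrite e e2 subrr.
move/eqP; rewrite !mulf_eq0 (negbTE hom0) (negbTE (neq0Ci C)) pnatr_eq0 /=.
move/eqP/dot_eq0 => y0.
by rewrite -[v]trmxK -/y y0 trmx0.
Qed.
Lemma step n k (L : 'M[C]_n) (E : 'M[C]_(n, k)) (g : C) (x : 'cV[C]_n) (om rho : C) :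
  L^T = L -> realmx L -> (forall p, 0 <= dot p (L *m p)) -> realmx E ->
  realmx x -> 0 < g -> hinf_le (transfer L E) g -> 0 < om -> 0 < rho ->
  0 <= rho * g * dot x (L *m x) - rho * dot (E^T *m x) (E^T *m x)
       + om * rho ^+ 2 * dot x x + g * dot (E^T *m x) (E^T *m x).
Proof.
move=> hLt hLr hpsd hEr hxr hg hH hom hrho; set u := E^T *m x.
have rom : om \is Num.real by rewrite gtr0_real.
have rrho : rho \is Num.real by rewrite gtr0_real.
have rg : g \is Num.real by rewrite gtr0_real.
have hom0 : om != 0 by rewrite gt_eqF.
set A := (om * 'i)%:M + L.
have hA : A \in unitmx by apply: A_unit.
set z := E *m u.
set y := invmx A *m z.
have hAy : A *m y = z by rewrite /y mulmxA mulmxV // mul1mx.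
have hG := hH om rom hom0 u.
rewrite (_ : transfer L E (om * 'i) *m u = E^T *m y) in hG; last by rewrite /transfer -!mulmxA.
rewrite -!dot_vnorm in hG.
set gv := E^T *m y in hG *.
have hi := sqrCi C.
set Y := dot y y; set Ly := dot y (L *m y); set Bv := dot u u.
set a := dot x (L *m x); set X := dot x x; set T := dot x y; set U := dot x (L *m y).
set G2 := dot gv gv in hG.
have rY : Y \is Num.real by rewrite ger0_real // dot_ge0.
have rLy : Ly \is Num.real by rewrite ger0_real // hpsd.
have rB : Bv \is Num.real by rewrite ger0_real // dot_ge0.
have hS : dot gv u = om * 'i * Y + Ly.
  by rewrite /gv dot_mulT // -/z -hAy /A mulmxDl dotDr dot_scal.
have hSc : (dot gv u)^* = om * - 'i * Y + Ly.
  by rewrite hS rmorphD !rmorphM /= conjCi (conj_Creal rom) (conj_Creal rY) (conj_Creal rLy).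
have hB : Bv = om * 'i * T + U.
  by rewrite /Bv {1}/u dot_mulT // -/z -hAy /A mulmxDl dotDr dot_scal.
have hBc : Bv = om * - 'i * T^* + U^*.
  by rewrite -{1}(conj_Creal rB) hB rmorphD !rmorphM /= conjCi (conj_Creal rom).
have hyLx : dot y (L *m x) = U^*.
  by rewrite dotC -{1}hLt dot_mulT.
have hyx : dot y x = T^* by rewrite dotC.
have h1 : 0 <= g ^+ 2 * Bv - G2 by rewrite subr_ge0.
have h2 := dot_ge0 (1 *: gv - g *: u).
rewrite -[X in dot _ X]mul1mx dot_expand !mul1mx (dotC gv u) hSc hS -/G2 -/Bv
  rmorph1 conj_Creal // in h2.
have h3 := dot_ge0 (1 *: gv - (- 'i * g) *: u).
rewrite -[X in dot _ X]mul1mx dot_expand !mul1mx (dotC gv u) hSc hS -/G2 -/Bv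
  rmorph1 rmorphM rmorphN /= conjCi conj_Creal // in h3.
have h4 := hpsd (g *: x - 1 *: y).
rewrite dot_expand hyLx -/a -/U -/Ly rmorph1 (conj_Creal rg) in h4.
have h5 := dot_ge0 (rho *: x - 'i *: y).
rewrite -[X in dot _ X]mul1mx dot_expand !mul1mx hyx -/X -/T -/Y conjCi
  (conj_Creal rrho) in h5.
have hLy : 0 <= g * Bv - Ly.
  rewrite -(pmulr_rge0 _ (_ : 0 < 2 * g)); last by rewrite mulr_gt0.
  apply: (le_trans (addr_ge0 h1 h2)); rewrite le_eqVlt; apply/orP; left; apply/eqP; ring.
have hoY : 0 <= g * Bv - om * Y.
  rewrite -(pmulr_rge0 _ (_ : 0 < 2 * g)); last by rewrite mulr_gt0.
  apply: (le_trans (addr_ge0 h1 h3)); rewrite le_eqVlt; apply/orP; left; apply/eqP; ring: hi.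
rewrite -(pmulr_rge0 _ hg).
have hfin := addr_ge0 (addr_ge0 (mulr_ge0 (ltW hrho) h4)
   (mulr_ge0 (mulr_ge0 (ltW hg) (ltW hom)) h5))
   (addr_ge0 (mulr_ge0 (ltW hrho) hLy) (mulr_ge0 (ltW hg) hoY)).
apply: (le_trans hfin); rewrite le_eqVlt; apply/orP; left; apply/eqP.
have eUc : U^* = Bv + om * 'i * T^* by rewrite hBc; ring.
have eU : U = Bv - om * 'i * T by rewrite hB; ring.
rewrite eUc eU; ring: hi.
Qed.
Lemma key n k (L : 'M[C]_n) (E : 'M[C]_(n, k)) (g : C) (x : 'cV[C]_n) :
  L^T = L -> realmx L -> (forall p, 0 <= dot p (L *m p)) -> realmx E ->
  realmx x -> 0 < g -> hinf_le (transfer L E) g ->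
  dot (E^T *m x) (E^T *m x) <= g * dot x (L *m x).
Proof.
move=> hLt hLr hpsd hEr hxr hg hH.
set Bv := dot _ _; set a := dot x _; set X := dot x x.
have hS := fun om rho => @step n k L E g x om rho hLt hLr hpsd hEr hxr hg hH.
rewrite -/Bv -/a -/X in hS.
have ra : a \is Num.real by rewrite ger0_real // hpsd.
have rB : Bv \is Num.real by rewrite ger0_real // dot_ge0.
have rg : g \is Num.real by rewrite gtr0_real.
have hX : 0 <= X by apply: dot_ge0.
have hB : 0 <= Bv by apply: dot_ge0.
rewrite real_leNgt ?rpredM //; apply/negP => hlt.
set d := Bv - g * a.
have hd : 0 < d by rewrite subr_gt0.
set rho := (2 + g * Bv) / d.
have hrho : 0 < rho.
  by rewrite divr_gt0 // ltr_wpDr // mulr_ge0 // ltW.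
have hX1 : 0 < X + 1 by rewrite ltr_wpDl.
set om := 1 / (rho ^+ 2 * (X + 1)).
have hom : 0 < om by rewrite divr_gt0 // mulr_gt0 // exprn_gt0.
have := hS om rho hom hrho.
have -> : rho * g * a - rho * Bv + om * rho ^+ 2 * X + g * Bv = - ((X + 2) / (X + 1)).
  rewrite /om /rho /d; field.
  rewrite (gt_eqF hX1) -/d (gt_eqF hd) gt_eqF //.
  by rewrite ltr_wpDr // mulr_ge0 // ltW.
move=> hle.
have hpos : 0 < (X + 2) / (X + 1) by rewrite divr_gt0 // ltr_wpDl.
have := ler_wpDl hle (lexx ((X + 2) / (X + 1))); rewrite addNr => hq.
by have := lt_le_trans hpos hq; rewrite ltxx.
Qed.
Lemma trD' n (A B : 'M[C]_n) : (A + B)^T = A^T + B^T.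
Proof. by apply/matrixP => i j; rewrite !mxE. Qed.
Lemma trN' n (A : 'M[C]_n) : (- A)^T = - A^T.
Proof. by apply/matrixP => i j; rewrite !mxE. Qed.
Lemma trZ' n (A : 'M[C]_n) c : (c *: A)^T = c *: A^T.
Proof. by apply/matrixP => i j; rewrite !mxE. Qed.

Lemma qf_dot n (N : 'M[C]_n) (x : 'cV[C]_n) :
  realmx x -> (x^T *m N *m x) 0 0 = dot x (N *m x).
Proof.
move=> hx; rewrite -mulmxA mxE /dot; apply: eq_bigr => i _.
by rewrite mxE hx.
Qed.
End S.

Unset Implicit Arguments.
Set Strict Implicit.

Theorem theorem2 (C : numClosedFieldType) (n m k : nat)
  (src dst : 'I_m -> 'I_n) (w : 'I_m -> C) (E : 'M[C]_(n, k)) (gamma : C) :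
  (forall j, src j != dst j) ->
  (forall j, 0 <= w j) ->
  connected_graph src dst w ->
  port_matrix E ->
  0 < gamma ->
  hinf_le (transfer (laplacian src dst w) E) gamma ->
  let L := laplacian src dst w in
  let P := gamma%:M : 'M[C]_n in
  nsd (- (P *m L) - L^T *m P + E *m E^T + gamma ^- 2 *: (P *m E *m E^T *m P)).
Proof.
move=> _ hw _ hport hg hH L P.
have hLt : L^T = L by apply: lap_tr.
have hLr : realmx L by apply: real_lap.
have hpsd : forall p, 0 <= dot p (L *m p) by move=> p; apply: lap_psd.
have hEr : realmx E by apply: real_port.
have hkey : forall x, realmx x ->
  dot (E^T *m x) (E^T *m x) <= gamma * dot x (L *m x).
  by move=> x hx; apply: key.
clearbody L.
have hg0 : gamma != 0 by rewrite gt_eqF.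
have -> : - (P *m L) - L^T *m P + E *m E^T + gamma ^- 2 *: (P *m E *m E^T *m P)
   = - (gamma *: L) - gamma *: L + E *m E^T + E *m E^T.
  rewrite /P hLt mul_scalar_mx mul_mx_scalar mul_scalar_mx -scalemxAl mul_mx_scalar.
  by rewrite !scalerA -mulrA -expr2 mulVf ?expf_neq0 // scale1r.
rewrite /nsd; split.
  by rewrite !trN' !trD' !trN' !trZ' hLt trmx_mul trmxK.
move=> x hx.
have hxr : realmx x by move=> i j; rewrite (ord1 j) conj_Creal.
rewrite qf_dot // !mulNmx !mulmxDl !mulNmx !dotNr !dotDr !dotNr.
rewrite -!scalemxAl !dotZr -!mulmxA -(dot_mulT x (E^T *m x) hEr).
have := hkey x hxr; rewrite -subr_ge0 => h.
have -> : - (- (gamma * dot x (L *m x)) - gamma * dot x (L *m x) +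
   dot (E^T *m x) (E^T *m x) + dot (E^T *m x) (E^T *m x)) =
  2 * (gamma * dot x (L *m x) - dot (E^T *m x) (E^T *m x)) by ring.
by apply: mulr_ge0.
Qed.
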